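(* Let $A\in\mathbb{R}^{M\times M}$ be symmetric positive definite with eigenvalues $0<\phi_1\le\phi_2\le\cdots\le\phi_M$. Let $b,k_{n_1},k_{n_2},k_{n_3}>0$ with $k_{n_2}<k_{n_1}/\sqrt{\phi_M}$, and define $$Q=\mathrm{sym}\left\{\begin{pmatrix}k_{n_1}A+k_{n_3}I&k_{n_2}A&0\\k_{n_2}A&k_{n_1}I&0\\0&0&I\end{pmatrix}\begin{pmatrix}0&I&0\\-A&-bI&bI\\0&0&-A\end{pmatrix}\right\},$$ where $\mathrm{sym}\{X\}=\frac12(X+X^T)$ and $I=I_M$. If moreover $$b<\phi_1,\quad k_{n_1}<\frac{2\phi_1}{b},\quad k_{n_2}<\min\Big\{\frac{bk_{n_1}}{\phi_M(2+b)},\ \frac2b-\frac{k_{n_1}}{\phi_1}\Big\},\quad k_{n_3}<\frac{bk_{n_2}\phi_1}{2},$$ then all $3M$ eigenvalues of $Q$ are negative, and each is bounded above by the maximum of the following negative quantities: $$k_{n_2}\phi_1(b-\phi_1),\qquad k_{n_2}\phi_M\Big(1+\frac b2\Big)-\frac{bk_{n_1}}2,\qquad \phi_1\Big(\frac{bk_{n_2}}2-1\Big)+\frac{bk_{n_1}}2.$$ *)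

(* Defs.v *)
(* matrices over an abstract real closed field R
   (covers the concrete reals). *)
From mathcomp Require Import all_boot all_order all_algebra.
Set Implicit Arguments. Unset Strict Implicit. Unset Printing Implicit Defensive.
Import Order.TTheory GRing.Theory Num.Theory.
Local Open Scope ring_scope.

Definition blk3 (R : nzRingType) (m : nat)
  (a11 a12 a13 a21 a22 a23 a31 a32 a33 : 'M[R]_m) : 'M[R]_(m + m + m) :=
  block_mx (block_mx a11 a12 a21 a22) (col_mx a13 a23)
           (row_mx a31 a32) a33.

Definition symmx (R : fieldType) (n : nat) (X : 'M[R]_n) : 'M[R]_n :=
  2^-1 *: (X + X^T).

Definition posdef (R : numFieldType) (n : nat) (A : 'M[R]_n) : Prop :=
  forall x : 'cV[R]_n, x != 0 -> 0 < (x^T *m A *m x) 0 0.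

Definition Qmat (R : fieldType) (M : nat) (A : 'M[R]_M) (b k1 k2 k3 : R)
  : 'M[R]_(M + M + M) :=
  symmx (blk3 (k1 *: A + k3%:M) (k2 *: A) 0
              (k2 *: A) (k1%:M) 0
              0 0 1%:M
         *m
         blk3 0 1%:M 0
              (- A) (- b%:M) (b%:M)
              0 0 (- A)).

(* Main.v *)
Require Import Defs.
From mathcomp Require Import all_boot all_order all_algebra.
From mathcomp Require Import complex.
From mathcomp Require Import ring lra.
Set Implicit Arguments. Unset Strict Implicit. Unset Printing Implicit Defensive.
Import Order.TTheory GRing.Theory Num.Theory.
Local Open Scope ring_scope.
Section Spec.
Variable R : rcfType.
Local Notation toC := (real_complex R).

Lemma conjC_toC (r : R) : Num.conj (toC r) = toC r.
Proof. apply: conj_Creal; apply/complex_realP; by exists r. Qed.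

Lemma eig_toC n (A : 'M[R]_n) r : eigenvalue (map_mx toC A) (toC r) -> eigenvalue A r.
Proof. by rewrite !eigenvalue_root_char -map_char_poly fmorph_root. Qed.

Lemma quad_bounds n (A : 'M[R]_n) c d :
 A^T = A -> (forall a, eigenvalue A a -> c <= a <= d) -> forall x : 'rV_n,
 c * (x *m x^T) 0 0 <= (x *m A *m x^T) 0 0 <= d * (x *m x^T) 0 0.
Proof.
move=> sA eA x.
set AC := map_mx toC A.
have ACt : map_mx Num.conj AC^T = AC.
  by rewrite -map_trmx /AC -map_mx_comp map_trmx sA; apply/matrixP => i j; rewrite !mxE /= conjC_toC.
have herm : AC \is hermsymmx.
  by apply/is_hermitianmxP; rewrite expr0 scale1r ACt.
have /orthomx_spectralP Adec := hermitian_normalmx herm.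
set P := spectralmx AC in Adec.
set D := spectral_diag AC in Adec.
have Pu : P \is unitarymx by apply: spectral_unitarymx.
have Punit : P \in unitmx by apply: spectral_unit.
have iP : invmx P = map_mx Num.conj P^T by rewrite invmx_unitary.
have Dreal := hermitian_spectral_diag_real herm.
have Deig : forall i, exists2 r, D 0 i = toC r & c <= r <= d.
  move=> i.
  have /mxOverP /(_ 0 i) /complex_realP [r Dr] := Dreal.
  exists r => //; apply: eA; apply: eig_toC; rewrite -Dr.
  apply/eigenvalueP; exists (row i P).
    have PA : P *m AC = diag_mx D *m P by rewrite {1}Adec !mulmxA mulmxV // mul1mx.
    by rewrite -row_mul PA mul_diag_mx; apply/rowP => j; rewrite !mxE.
  apply/eqP => /(congr1 (mulmx^~ (invmx P))).
  rewrite rowE -mulmxA mulmxV // mulmx1 mul0mx => /matrixP /(_ 0 i).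
  by rewrite !mxE !eqxx /= => /eqP; rewrite oner_eq0.
set xC := map_mx toC x.
set xCt := map_mx toC x^T.
set w := xC *m invmx P.
have wt : map_mx Num.conj w^T = P *m xCt.
  rewrite /w iP trmx_mul map_mxM map_trmx trmxK.
  by congr (_ *m _); apply/matrixP => i j; rewrite !mxE; [exact: conjCK | exact: conjC_toC].
have Ex : toC ((x *m x^T) 0 0) = \sum_j w 0 j * Num.conj (w 0 j).
  have -> : toC ((x *m x^T) 0 0) = (xC *m xCt) 0 0 by rewrite -map_mxM [RHS]mxE.
  rewrite -[xC]mulmx1 -(mulVmx Punit) !mulmxA -/w -mulmxA -wt mxE.
  by apply: eq_bigr => j _; rewrite !mxE.
have EA : toC ((x *m A *m x^T) 0 0) = \sum_j w 0 j * D 0 j * Num.conj (w 0 j).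
  have -> : toC ((x *m A *m x^T) 0 0) = (xC *m AC *m xCt) 0 0 by rewrite -!map_mxM [RHS]mxE.
  rewrite Adec !mulmxA -/w -!mulmxA -wt mulmxA mxE.
  by apply: eq_bigr => j _; rewrite mul_diag_mx !mxE mulrA.
apply/andP; split; rewrite -lecR rmorphM /= Ex EA mulr_sumr; apply: ler_sum => j _;
  rewrite (mulrAC (w 0 j)) (mulrC _ (D 0 j));
  case: (Deig j) => r -> /andP[cr rd]; apply: ler_wpM2r; rewrite ?mul_conjC_ge0 ?lecR //.
Qed.
End Spec.

Lemma arith (R : realFieldType) (p1 pM b k1 k2 k3 m xx yy zz xy xz yz xAx yAy zAz xAy xAz s : R) :
  0 < p1 -> p1 <= pM -> 0 < b -> 0 < k1 -> 0 < k2 -> 0 < k3 -> b < p1 ->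
  k3 < b * k2 * p1 / 2 -> k2 * b < 2 ->
  k2 * p1 * (b - p1) <= m ->
  k2 * pM * (1 + b / 2) - b * k1 / 2 <= m ->
  p1 * (b * k2 / 2 - 1) + b * k1 / 2 <= m ->
  0 <= xx -> 0 <= yy -> 0 <= zz ->
  p1 * (xx + 2 * xy + yy) <= xAx + 2 * xAy + yAy ->
  0 <= xx + 2 * xy + yy ->
  p1 * (xx - 2 * xz + zz) <= xAx - 2 * xAz + zAz ->
  0 <= xx - 2 * xz + zz ->
  0 <= yy - 2 * yz + zz ->
  0 <= s - 2 * p1 * xAx + p1 ^+ 2 * xx ->
  p1 * xx <= xAx -> yAy <= pM * yy -> p1 * zz <= zAz ->
  k3 * xy - b * k2 * xAy + k2 * yAy - k2 * s + b * k2 * xAz - b * k1 * yy + b * k1 * yz - zAz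
   <= m * (xx + yy + zz).
Proof.
move=> p1g pMg bg k1g k2g k3g bp1 hk3 hkb q1 q2 q3 xxg yyg zzg H1 H1b H2 H2b H3 H4 H5 H6 H7.
have bk2 : 0 < b * k2 by apply: mulr_gt0.
have bk1 : 0 < b * k1 by apply: mulr_gt0.
have bk2p : 0 < b * k2 * p1 by apply: mulr_gt0.
have h1 : 0 <= (b * k2 / 2) * (xAx + 2 * xAy + yAy - p1 * (xx + 2 * xy + yy)).
  by apply: mulr_ge0; [apply: divr_ge0; [exact: ltW|] | rewrite subr_ge0].
have h2 : 0 <= (b * k2 * p1 - k3) / 2 * (xx + 2 * xy + yy).
  by apply: mulr_ge0 => //; apply: divr_ge0 => //; lra.
have h3 : 0 <= (b * k2 / 2) * (xAx - 2 * xAz + zAz).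
  apply: mulr_ge0; [apply: divr_ge0; [exact: ltW|] |].
  done. apply: le_trans H2; apply: mulr_ge0 => //; exact: ltW.
have h4 : 0 <= (b * k1 / 2) * (yy - 2 * yz + zz).
  by apply: mulr_ge0 => //; apply: divr_ge0; [exact: ltW|].
have h5 : 0 <= k2 * (s - 2 * p1 * xAx + p1 ^+ 2 * xx) by apply: mulr_ge0 => //; exact: ltW.
have h6 : 0 <= k2 * (2 * p1 - b) * (xAx - p1 * xx).
  by apply: mulr_ge0; [apply: mulr_ge0; [exact: ltW | lra] | rewrite subr_ge0].
have h7 : 0 <= (m - k2 * p1 * (b - p1) + k3 / 2) * xx by apply: mulr_ge0 => //; lra.
have h8 : 0 <= k2 * (1 + b / 2) * (pM * yy - yAy).
  by apply: mulr_ge0; [apply: mulr_ge0; [exact: ltW | lra] | rewrite subr_ge0].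
have h9 : 0 <= (m + b * k1 / 2 + k3 / 2 - k2 * (1 + b / 2) * pM) * yy by apply: mulr_ge0 => //; lra.
have h10 : 0 <= (1 - b * k2 / 2) * (zAz - p1 * zz) by apply: mulr_ge0; [lra | rewrite subr_ge0].
have h11 : 0 <= (m - b * k1 / 2 + p1 * (1 - b * k2 / 2)) * zz by apply: mulr_ge0 => //; lra.
rewrite -subr_ge0.
have -> : m * (xx + yy + zz) - (k3 * xy - b * k2 * xAy + k2 * yAy - k2 * s + b * k2 * xAz - b * k1 * yy + b * k1 * yz - zAz)
  = (b * k2 / 2) * (xAx + 2 * xAy + yAy - p1 * (xx + 2 * xy + yy))
  + (b * k2 * p1 - k3) / 2 * (xx + 2 * xy + yy)
  + (b * k2 / 2) * (xAx - 2 * xAz + zAz)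
  + (b * k1 / 2) * (yy - 2 * yz + zz)
  + k2 * (s - 2 * p1 * xAx + p1 ^+ 2 * xx)
  + k2 * (2 * p1 - b) * (xAx - p1 * xx)
  + (m - k2 * p1 * (b - p1) + k3 / 2) * xx
  + k2 * (1 + b / 2) * (pM * yy - yAy)
  + (m + b * k1 / 2 + k3 / 2 - k2 * (1 + b / 2) * pM) * yy
  + (1 - b * k2 / 2) * (zAz - p1 * zz)
  + (m - b * k1 / 2 + p1 * (1 - b * k2 / 2)) * zz by field.
by rewrite !addr_ge0.
Qed.

Section Expand.
Variable R : numFieldType.
Variable M : nat.
Lemma eD (X Y : 'M[R]_1) : (X + Y) 0 0 = X 0 0 + Y 0 0. Proof. by rewrite !mxE. Qed.
Lemma eN (X : 'M[R]_1) : (- X) 0 0 = - X 0 0. Proof. by rewrite !mxE. Qed.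
Lemma eZ a (X : 'M[R]_1) : (a *: X) 0 0 = a * X 0 0. Proof. by rewrite !mxE. Qed.
Lemma eT (X : 'M[R]_1) : (X^T) 0 0 = X 0 0. Proof. by rewrite !mxE. Qed.
Lemma eswap (x y : 'rV[R]_M) (B : 'M[R]_M) : B^T = B ->
  (y *m B *m x^T) 0 0 = (x *m B *m y^T) 0 0.
Proof. by move=> sB; rewrite -eT !trmx_mul trmxK sB mulmxA. Qed.
Lemma eswap1 (x y : 'rV[R]_M) : (y *m x^T) 0 0 = (x *m y^T) 0 0.
Proof. by rewrite -eT !trmx_mul trmxK. Qed.

Lemma quadT n (X : 'M[R]_n) (v : 'rV_n) : (v *m X^T *m v^T) 0 0 = (v *m X *m v^T) 0 0.
Proof. by rewrite -eT !trmx_mul !trmxK mulmxA. Qed.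
Lemma symmx_quad n (X : 'M[R]_n) (v : 'rV_n) : (v *m symmx X *m v^T) 0 0 = (v *m X *m v^T) 0 0.
Proof.
rewrite /symmx -scalemxAr -scalemxAl eZ mulmxDr mulmxDl eD quadT.
by field.
Qed.

Lemma Qexpand (A : 'M[R]_M) b k1 k2 k3 (x y z : 'rV[R]_M) : A^T = A ->
  let v := row_mx (row_mx x y) z in
  (v *m Qmat A b k1 k2 k3 *m v^T) 0 0 =
  k3 * (x *m y^T) 0 0 - b * k2 * (x *m A *m y^T) 0 0 + k2 * (y *m A *m y^T) 0 0
  - k2 * (x *m A *m A *m x^T) 0 0 + b * k2 * (x *m A *m z^T) 0 0
  - b * k1 * (y *m y^T) 0 0 + b * k1 * (y *m z^T) 0 0 - (z *m A *m z^T) 0 0.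
Proof.
move=> sA v.
rewrite /Qmat; rewrite symmx_quad.
rewrite /blk3 /v !tr_row_mx.
rewrite !mulmxA !mul_row_block !mul_row_col !mul_mx_row.
rewrite !(mulmx0, mul0mx, addr0, add0r, mulmx1, mul1mx, row_mx0, mul_row_block, mul_row_col, mul_mx_row).
rewrite !(mulmxDl, mulmxDr, mulmxN, mulNmx, mul_mx_scalar, mulmxBl, mulmxBr).
rewrite -!(scalemxAl, scalemxAr) ?mulmxA !(eD, eN, eZ).
rewrite (eswap x y sA); ring.
Qed.
End Expand.

Section Extra.
Variable R : realFieldType.
Variable M : nat.
Lemma expD (u w : 'rV[R]_M) B : B^T = B ->
  ((u + w) *m B *m (u + w)^T) 0 0 =
  (u *m B *m u^T) 0 0 + 2 * (u *m B *m w^T) 0 0 + (w *m B *m w^T) 0 0.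
Proof.
move=> sB; rewrite linearD /= !(mulmxDl, mulmxDr) !(eD) (eswap u w sB); ring.
Qed.
Lemma expB (u w : 'rV[R]_M) B : B^T = B ->
  ((u - w) *m B *m (u - w)^T) 0 0 =
  (u *m B *m u^T) 0 0 - 2 * (u *m B *m w^T) 0 0 + (w *m B *m w^T) 0 0.
Proof.
move=> sB; rewrite linearB /= !(mulmxBl, mulmxBr) !(eD, eN) (eswap u w sB); ring.
Qed.
Lemma sq_ge0 n (u : 'rV[R]_n) : 0 <= (u *m u^T) 0 0.
Proof. rewrite mxE; apply: sumr_ge0 => i _; rewrite !mxE -expr2 sqr_ge0 //. Qed.
Lemma sq_gt0 n (u : 'rV[R]_n) : u != 0 -> 0 < (u *m u^T) 0 0.
Proof.
move=> unz; rewrite lt_def sq_ge0 andbT; apply: contra unz => h0.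
have h : (u *m u^T) 0 0 = 0 by apply/eqP.
apply/eqP/rowP => i; rewrite mxE.
have nn : forall j, xpredT j -> 0 <= u 0 j * u^T j 0.
  by move=> j _; rewrite mxE -expr2 sqr_ge0.
move: h; rewrite mxE => h.
have := psumr_eq0P nn h (i:=i) isT; rewrite mxE => /eqP.
by rewrite mulf_eq0 orbb => /eqP.
Qed.
Lemma expF (x : 'rV[R]_M) (A : 'M[R]_M) p : A^T = A ->
  ((x *m (A - p%:M)) *m (x *m (A - p%:M))^T) 0 0 =
  (x *m A *m A *m x^T) 0 0 - 2 * p * (x *m A *m x^T) 0 0 + p ^+ 2 * (x *m x^T) 0 0.
Proof.
move=> sA.
have sB : (A - p%:M)^T = A - p%:M.
  by apply/matrixP => i j; rewrite !mxE -{1}sA !mxE eq_sym.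
rewrite trmx_mul sB.
rewrite !(mulmxBl, mulmxBr, mul_mx_scalar, mul_scalar_mx, mulmxA).
rewrite -!(scalemxAl, scalemxAr) ?mulmxA !(eD, eN, eZ).
ring.
Qed.
Lemma expD1 (u w : 'rV[R]_M) :
  ((u + w) *m (u + w)^T) 0 0 = (u *m u^T) 0 0 + 2 * (u *m w^T) 0 0 + (w *m w^T) 0 0.
Proof. by have := expD u w (trmx1 _ _); rewrite !mulmx1. Qed.
Lemma expB1 (u w : 'rV[R]_M) :
  ((u - w) *m (u - w)^T) 0 0 = (u *m u^T) 0 0 - 2 * (u *m w^T) 0 0 + (w *m w^T) 0 0.
Proof. by have := expB u w (trmx1 _ _); rewrite !mulmx1. Qed.
End Extra.

Theorem lemma2 (R : rcfType) (M : nat) (A : 'M[R]_M) (phi1 phiM : R)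
  (b kn1 kn2 kn3 : R) :
  A^T = A -> posdef A ->
  eigenvalue A phi1 -> eigenvalue A phiM ->
  (forall a, eigenvalue A a -> phi1 <= a <= phiM) ->
  0 < phi1 ->
  0 < b -> 0 < kn1 -> 0 < kn2 -> 0 < kn3 ->
  kn2 < kn1 / Num.sqrt phiM ->
  b < phi1 ->
  kn1 < 2 * phi1 / b ->
  kn2 < Num.min (b * kn1 / (phiM * (2 + b))) (2 / b - kn1 / phi1) ->
  kn3 < b * kn2 * phi1 / 2 ->
  forall l : R, eigenvalue (Qmat A b kn1 kn2 kn3) l ->
    l < 0 /\
    l <= Num.max (kn2 * phi1 * (b - phi1))
           (Num.max (kn2 * phiM * (1 + b / 2) - b * kn1 / 2)
                    (phi1 * (b * kn2 / 2 - 1) + b * kn1 / 2)).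
Proof.
move=> sA _ e1 _ eB p1g bg k1g k2g k3g _ bp1 _ hk2 hk3 l /eigenvalueP [v vQ vnz].
have p1M : phi1 <= phiM by case/andP: (eB _ e1).
have pMg : 0 < phiM by apply: lt_le_trans p1M.
have bn0 : b != 0 by rewrite gt_eqF.
have p1n0 : phi1 != 0 by rewrite gt_eqF.
move: hk2; rewrite lt_min => /andP[hk2a hk2b].
have ha : kn2 * (phiM * (2 + b)) < b * kn1.
  by move: hk2a; rewrite ltr_pdivlMr // mulr_gt0 // addr_gt0.
have hb : kn2 * (b * phi1) < 2 * phi1 - b * kn1.
  have E : (2 / b - kn1 / phi1) * (b * phi1) = 2 * phi1 - b * kn1 by field; rewrite bn0 p1n0.
  by rewrite -E ltr_pM2r // mulr_gt0.
have bk1 : 0 < b * kn1 by apply: mulr_gt0.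
have hkb : kn2 * b < 2.
  have : kn2 * b * phi1 < 2 * phi1 by lra.
  by rewrite ltr_pM2r.
have q1 : kn2 * phi1 * (b - phi1) < 0.
  by rewrite pmulr_rlt0 ?subr_lt0 // mulr_gt0.
have q2 : kn2 * phiM * (1 + b / 2) - b * kn1 / 2 < 0 by lra.
have q3 : phi1 * (b * kn2 / 2 - 1) + b * kn1 / 2 < 0 by lra.
set m := Num.max _ _.
have mneg : m < 0 by rewrite /m !gt_max q1 q2 q3.
have m1 : kn2 * phi1 * (b - phi1) <= m by rewrite /m !le_max lexx.
have m2 : kn2 * phiM * (1 + b / 2) - b * kn1 / 2 <= m by rewrite /m !le_max lexx ?orbT.
have m3 : phi1 * (b * kn2 / 2 - 1) + b * kn1 / 2 <= m by rewrite /m !le_max lexx ?orbT.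
set x := lsubmx (lsubmx v).
set y := rsubmx (lsubmx v).
set z := rsubmx v.
have hv : v = row_mx (row_mx x y) z by rewrite /x /y /z !hsubmxK.
have qb := quad_bounds sA eB.
have HF := Qexpand b kn1 kn2 kn3 x y z sA; rewrite /= -hv in HF.
have HL : (v *m Qmat A b kn1 kn2 kn3 *m v^T) 0 0 = l * (v *m v^T) 0 0.
  by rewrite vQ -scalemxAl eZ.
have HN : (v *m v^T) 0 0 = (x *m x^T) 0 0 + (y *m y^T) 0 0 + (z *m z^T) 0 0.
  by rewrite [in LHS]hv !tr_row_mx !mul_row_col !eD.
have Npos : 0 < (v *m v^T) 0 0 by apply: sq_gt0.
have H1 : phi1 * ((x *m x^T) 0 0 + 2 * (x *m y^T) 0 0 + (y *m y^T) 0 0) <=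
   (x *m A *m x^T) 0 0 + 2 * (x *m A *m y^T) 0 0 + (y *m A *m y^T) 0 0.
  by have /andP[+ _] := qb (x + y); rewrite expD1 expD.
have H1b : 0 <= (x *m x^T) 0 0 + 2 * (x *m y^T) 0 0 + (y *m y^T) 0 0.
  by rewrite -expD1 sq_ge0.
have H2 : phi1 * ((x *m x^T) 0 0 - 2 * (x *m z^T) 0 0 + (z *m z^T) 0 0) <=
   (x *m A *m x^T) 0 0 - 2 * (x *m A *m z^T) 0 0 + (z *m A *m z^T) 0 0.
  by have /andP[+ _] := qb (x - z); rewrite expB1 expB.
have H2b : 0 <= (x *m x^T) 0 0 - 2 * (x *m z^T) 0 0 + (z *m z^T) 0 0.
  by rewrite -expB1 sq_ge0.
have H3 : 0 <= (y *m y^T) 0 0 - 2 * (y *m z^T) 0 0 + (z *m z^T) 0 0.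
  by rewrite -expB1 sq_ge0.
have H4 : 0 <= (x *m A *m A *m x^T) 0 0 - 2 * phi1 * (x *m A *m x^T) 0 0 + phi1 ^+ 2 * (x *m x^T) 0 0.
  by rewrite -(expF x phi1 sA) sq_ge0.
have /andP[H5 _] := qb x.
have /andP[_ H6] := qb y.
have /andP[H7 _] := qb z.
have key := arith p1g p1M bg k1g k2g k3g bp1 hk3 hkb m1 m2 m3 (sq_ge0 x) (sq_ge0 y) (sq_ge0 z)
  H1 H1b H2 H2b H3 H4 H5 H6 H7.
rewrite -HF -HN HL ler_pM2r // in key.
split => //; exact: le_lt_trans key mneg.
Qed.
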